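(* Let $F_{i,l}(x)$, for integers $i\ge0$ and $-1\le l\le i+1$, be the polynomials defined recursively by $F_{0,0}(x)=1$, $F_{i,-1}(x)=F_{i,i+1}(x)=0$, and $$F_{i+1,l}(x)=F_{i,l-1}(x)-(2i+1-l)\,x\,F_{i,l}(x)+(x^2-4)F'_{i,l}(x)\quad(0\le l\le i+1).$$ Then (1) $F_{i,i}(x)=1$ for all $i\ge0$; (2) for each $k\ge0$, $F_{i+k,i}(x)$ has degree $k$ for every $i\ge0$; (3) $F_{i+1,i}(x)=-x\binom{i+2}{2}$ for all $i\ge0$.
   Context: $F'_{i,l}$ denotes the derivative of $F_{i,l}$ with respect to $x$. *)

(* Defs.v *)
From mathcomp Require Import all_boot all_order all_algebra.
Set Implicit Arguments. Unset Strict Implicit. Unset Printing Implicit Defensive.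
Import GRing.Theory Num.Theory.
Local Open Scope ring_scope.

(* The index l = -1
   is handled by the boundary convention F_{i,-1} = 0 (case l = 0 below),
   and F_{i,l} = 0 for l > i (in particular F_{i,i+1} = 0). *)
Fixpoint F (i : nat) : nat -> {poly int} :=
  match i with
  | 0 => fun l => if l == 0%N then 1 else 0
  | i'.+1 => fun l =>
      if (l <= i'.+1)%N then
        (if l is l'.+1 then F i' l' else 0)
        - (((2 * i' + 1)%:R - l%:R) : int) *: ('X * F i' l)
        + ('X ^+ 2 - 4%:P) * (F i' l)^`()
      else 0
  end.

(* Main.v *)
Require Import Defs.
From mathcomp Require Import all_boot all_order all_algebra.
From mathcomp Require Import zify ring lra.
Import GRing.Theory Num.Theory.
Local Open Scope ring_scope.

Lemma F_gt n l : (n < l)%N -> F n l = 0.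
Proof. case: n => [|n] /= H; first by case: l H. by rewrite leqNgt H. Qed.

Lemma FS n l : F n.+1 l =
  if (l <= n.+1)%N then
    (if l is l'.+1 then F n l' else 0)
    - (((2 * n + 1)%:R - l%:R) : int) *: ('X * F n l)
    + ('X ^+ 2 - 4%:P) * (F n l)^`()
  else 0.
Proof. by []. Qed.

Lemma F_diag i : F i i = 1.
Proof.
elim: i => [|i IH] //=.
by rewrite leqnn IH (@F_gt i i.+1 (ltnSn i)) mulr0 scaler0 deriv0 mulr0 subr0 addr0.
Qed.

Lemma F_sub i : F i.+1 i = - (('C(i + 2, 2))%:R *: 'X).
Proof.
elim: i => [|i IH].
  by rewrite /= derivC mulr0 addr0 mulr1 sub0r subr0 scale1r.
rewrite FS leqW ?leqnn // IH F_diag derivC mulr0 addr0 mulr1.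
rewrite [in RHS]addSn binS bin1.
rewrite -!scalerN -!scalerDl; congr (_ *: _).
lia.
Qed.

Lemma coefF n l j : (l <= n.+1)%N -> (F n.+1 l)`_j =
  (if l is l'.+1 then (F n l')`_j else 0)
  - ((2 * n + 1)%:R - l%:R) * (if j is m.+1 then (F n l)`_m else 0)
  + (if j is m.+1 then (F n l)`_m *+ m else 0)
  - 4 * ((F n l)`_j.+1 *+ j.+1).
Proof.
move=> H; rewrite FS H coefD coefB coefZ coefXM (mulrBl _ ('X^2)) coefB coefXnM coefCM !coef_deriv.
rewrite !addrA; congr (_ - _).
case: l H => [|l] H; case: j => [|[|m]] /=; rewrite ?coef0 ?mulr0 ?addr0 ?mulr0n ?subr0 ?subSS ?subn0 //.
Qed.

Lemma Fcoef n : forall l, (l <= n)%N ->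
  (forall j, (n - l < j)%N -> (F n l)`_j = 0) /\
  0 < (-1) ^+ (n - l) * (F n l)`_(n - l).
Proof.
elim: n => [|n IH] l Hl.
  have -> : l = 0%N by lia.
  rewrite /=; split; first by move=> [|j] // _; rewrite coef1.

  by rewrite subnn coef1 expr0 mul1r /= ltr01.
case: (leqP l n) => Hln; last first.
  have -> : l = n.+1 by lia.
  rewrite F_diag subnn; split; first by move=> [|j] // _; rewrite coef1.
  by rewrite coef1 expr0 mul1r /= ltr01.
have [zB pB] := IH l Hln.
have [d Ed] : exists d, (n - l = d)%N by eexists.
rewrite Ed in zB pB.
have -> : (n.+1 - l = d.+1)%N by lia.
have HA : forall j, (d.+1 < j)%N ->
   (if l is l'.+1 then (F n l')`_j else 0) = 0.
  case: l Hl Hln {zB pB} Ed => [|l'] // Hl Hln Ed j Hj.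
  have [zA _] := IH l' (ltnW Hln).
  apply: zA; lia.
have pA : 0 <= (-1) ^+ d.+1 * (if l is l'.+1 then (F n l')`_d.+1 else 0).
  case: l Hl Hln {zB pB HA} Ed => [|l'] Hl Hln Ed; first by rewrite mulr0.
  have [_ pA] := IH l' (ltnW Hln).
  have E : (n - l' = d.+1)%N by lia.
  by rewrite E in pA; apply: Order.POrderTheory.ltW.
split.
  case=> [|m] Hm; first by lia.
  rewrite coefF; last by lia.
  rewrite HA // !zB; try lia.
rewrite coefF; last by lia.
rewrite (zB d.+2); last by lia.
rewrite mul0rn mulr0 subr0.
have hc : ((2 * n + 1)%:R - l%:R : int) = (n.+1)%:R + d%:R by lia.
rewrite hc.
set A := (if l is l'.+1 then _ else _) in pA *.
set B := (F n l)`_d in pB *.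
have -> : (-1) ^+ d.+1 * (A - ((n.+1)%:R + d%:R) * B + B *+ d) =
   (-1) ^+ d.+1 * A + (n.+1)%:R * ((-1) ^+ d * B) by rewrite exprS; ring.
apply: ltr_wpDl => //.
by apply: mulr_gt0.
Qed.
Theorem lemma6p3 :
  (forall i : nat, F i i = 1) /\
  (forall k i : nat, size (F (i + k) i) = k.+1) /\
  (forall i : nat, F i.+1 i = - (('C(i + 2, 2))%:R *: 'X)).
Proof.
split; first exact: F_diag.
split; last exact: F_sub.
move=> k i.
have [z p] := @Fcoef (i + k) i (leq_addr k i).
have E : (i + k - i = k)%N by lia.
rewrite E in z p.
apply/eqP; rewrite eqn_leq; apply/andP; split.
  by apply/leq_sizeP => j Hj; apply: z.
rewrite ltnNge; apply/negP => /leq_sizeP H.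
by rewrite H // mulr0 Order.POrderTheory.ltxx in p.
Qed.
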